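(* Let $(X_n,q_{n,n+1})_{n\in\mathbb{N}}$ be an inverse sequence of finite $T_0$ topological spaces and continuous maps. For each $n$ let $C_n$ be a core of $X_n$, $i_n:C_n\to X_n$ the inclusion, and $r_n:X_n\to C_n$ a retraction with $r_n\circ i_n=\mathrm{id}_{C_n}$ and $i_n\circ r_n$ homotopic to $\mathrm{id}_{X_n}$. Then $(X_n,q_{n,n+1})$ is isomorphic in pro-$HTop$ to the inverse sequence $(C_n, r_n\circ q_{n,n+1}\circ i_{n+1})$ (the core of $(X_n,q_{n,n+1})$).
   Context: Finite $T_0$ spaces are identified with finite posets ($x\le y$ iff $U_x\subseteq U_y$, where $U_x$ is the minimal open set containing $x$); let $F_x=\{y\mid y\ge x\}$. A point $x$ is a down (resp. up) beat point if $U_x\setminus\{x\}$ has a maximum (resp. $F_x\setminus\{x\}$ has a minimum). A core of a finite space $X$ is a subspace obtained by removing beat points one at a time until none remain. $HTop$ is the homotopy category of topological spaces and pro-$HTop$ its pro-category of inverse systems (morphisms of inverse sequences represented by an increasing index map $f:\mathbb{N}\to\mathbb{N}$ and maps $f_n:X_{f(n)}\to Y_n$ commuting up to homotopy with bonding maps, modulo the usual equivalence). *)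

(* Defs.v *)
From HB Require Import structures.
From mathcomp Require Import all_boot all_order all_algebra.
From mathcomp Require Import all_classical all_reals all_analysis.
From mathcomp Require Import Rstruct Rstruct_topology.
Set Implicit Arguments. Unset Strict Implicit. Unset Printing Implicit Defensive.
Import Order.TTheory GRing.Theory Num.Theory.
Local Open Scope classical_set_scope.
Local Open Scope ring_scope.

Notation Real := Rdefinitions.R.

Definition homotopic {X Y : topologicalType} (f g : X -> Y) : Prop :=
  exists H : X * Real -> Y,
    {within [set p : X * Real | 0 <= p.2 <= 1], continuous H} /\
    (forall x, H (x, 0) = f x) /\ (forall x, H (x, 1) = g x).

(** Specialization order of a (finite) space: x <= y iff U_x ⊆ U_y,
    i.e. every open set containing y contains x. *)
Definition spec_le {X : topologicalType} (x y : X) : Prop :=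
  forall U : set X, open U -> U y -> U x.
Definition spec_lt {X : topologicalType} (x y : X) : Prop :=
  spec_le x y /\ x <> y.

Definition down_beat_point {X : topologicalType} (A : set X) (x : X) : Prop :=
  A x /\ exists m, A m /\ spec_lt m x /\
    (forall y, A y -> spec_lt y x -> spec_le y m).
Definition up_beat_point {X : topologicalType} (A : set X) (x : X) : Prop :=
  A x /\ exists m, A m /\ spec_lt x m /\
    (forall y, A y -> spec_lt x y -> spec_le m y).
Definition beat_point {X : topologicalType} (A : set X) (x : X) : Prop :=
  down_beat_point A x \/ up_beat_point A x.

Inductive beat_reduces {X : topologicalType} : set X -> set X -> Prop :=
  | br_refl A : beat_reduces A A
  | br_step A C x : beat_point A x -> beat_reduces (A `\ x) C ->
      beat_reduces A C.

Definition is_core {X : topologicalType} (C : set X) : Prop :=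
  beat_reduces [set: X] C /\ forall x, ~ beat_point C x.

Definition finite_T0 (X : topologicalType) : Prop :=
  finite_set [set: X] /\ kolmogorov_space X.

Record invseq := InvSeq {
  iobj : nat -> topologicalType;
  ibond : forall n, iobj n.+1 -> iobj n }.

(* bond_iter s n k = q_{n, k+n} : iobj s (k + n) -> iobj s n *)
Fixpoint bond_iter (s : invseq) (n k : nat) : iobj s (k + n) -> iobj s n :=
  match k return iobj s (k + n) -> iobj s n with
  | 0 => fun x => x
  | k'.+1 => fun x => @bond_iter s n k' (@ibond s (k' + n) x)
  end.

Definition pbond (s : invseq) (i j : nat) (h : (i <= j)%N) :
    iobj s j -> iobj s i :=
  fun x => @bond_iter s i (j - i) (eq_rect_r (iobj s) x (subnK h)).

(** Raw data of a morphism of inverse sequences X -> Y in pro-HTop: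
    index map a and level maps h n : X_(a n) -> Y_n. *)
Definition is_pro_mor (X Y : invseq) (a : nat -> nat)
    (h : forall n, iobj X (a n) -> iobj Y n) : Prop :=
  {homo a : n m / (n <= m)%N} /\
  (forall n, continuous (h n)) /\
  (forall n m (hnm : (n <= m)%N) (hanm : (a n <= a m)%N),
     homotopic (h n \o @pbond X _ _ hanm) (@pbond Y _ _ hnm \o h m)).

Definition pro_equiv (X Y : invseq) (a : nat -> nat)
    (h : forall n, iobj X (a n) -> iobj Y n) (b : nat -> nat)
    (k : forall n, iobj X (b n) -> iobj Y n) : Prop :=
  forall n, exists m (ha : (a n <= m)%N) (hb : (b n <= m)%N),
    homotopic (h n \o @pbond X _ _ ha) (k n \o @pbond X _ _ hb).

Definition pro_comp_idx (a b : nat -> nat) : nat -> nat := fun n => a (b n).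
Definition pro_comp (X Y Z : invseq) (a : nat -> nat)
    (h : forall n, iobj X (a n) -> iobj Y n) (b : nat -> nat)
    (k : forall n, iobj Y (b n) -> iobj Z n) :
    forall n, iobj X (pro_comp_idx a b n) -> iobj Z n :=
  fun n => k n \o h (b n).
Definition pro_id (X : invseq) : forall n, iobj X (id n) -> iobj X n :=
  fun n x => x.

Definition pro_isomorphic (X Y : invseq) : Prop :=
  exists (a : nat -> nat) (h : forall n, iobj X (a n) -> iobj Y n)
         (b : nat -> nat) (k : forall n, iobj Y (b n) -> iobj X n),
    is_pro_mor h /\ is_pro_mor k /\
    pro_equiv (pro_comp h k) (@pro_id X) /\
    pro_equiv (pro_comp k h) (@pro_id Y).

Definition core_seq (X : nat -> topologicalType)
    (q : forall n, X n.+1 -> X n) (C : forall n, set (X n))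
    (r : forall n, X n -> set_type (C n)) : invseq :=
  @InvSeq (fun n => set_type (C n))
          (fun n c => r n (q n (set_val c))).

(* Main.v *)
Set Warnings "-all".
Require Import Defs.
From HB Require Import structures.
From mathcomp Require Import all_boot all_order all_algebra.
From mathcomp Require Import all_classical all_reals all_analysis.
From mathcomp Require Import Rstruct Rstruct_topology.
From mathcomp Require Import lra.
Import Order.TTheory GRing.Theory Num.Theory.
Local Open Scope classical_set_scope.
Local Open Scope ring_scope.

Lemma within_comp {T U V : topologicalType} (A : set T) (B : set U)
  (g : T -> U) (f : U -> V) : continuous g -> (forall x, A x -> B (g x)) ->
  {within B, continuous f} -> {within A, continuous (f \o g)}.
Proof.
move=> cg gAB cf; apply/subspace_continuousP => x Ax.
have /subspace_continuousP/(_ _ (gAB _ Ax)) cfx := cf.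
have h : g @ within A (nbhs x) --> within B (nbhs (g x)).
  move=> W /=; rewrite /within /= nbhs_simpl => nW.
  have := cg x [set y | B y -> W y] nW; rewrite /= nbhs_simpl.
  move=> hh; have hw : \forall y \near x, A y -> W (g y).
    exact: (@filterS _ (nbhs x) _ [set y | B (g y) -> W (g y)] _ (fun y hy Ay => hy (gAB y Ay)) hh).
  exact: hw.
by have := @cvg_comp _ _ _ g (from_subspace B f) _ _ _ h cfx.
Qed.

Definition strip (X : topologicalType) := [set p : X * Rdefinitions.R | 0 <= p.2 <= 1].

Lemma cont_aff (X Y : topologicalType) (u : X -> Y) (c d : Rdefinitions.R) :
  continuous u -> continuous (fun p : X * Rdefinitions.R => (u p.1, c * p.2 + d)).
Proof.
move=> cu z; apply: (@cvg_pair _ _ _ (nbhs z) (nbhs (u z.1)) (nbhs (c * z.2 + d))).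
  exact: (@continuous_comp _ _ _ fst u z cvg_fst (cu _)).
have ca : continuous (fun t : Rdefinitions.R => c * t + d).
  move=> t. apply: (@cvgD _ Rdefinitions.R^o); last exact: cvg_cst.
  apply: (@cvgMl_tmp _ _ _ _ id c t); exact: cvg_id.
exact: (@continuous_comp _ _ _ snd _ z cvg_snd (ca _)).
Qed.

Lemma closed_strip (X : topologicalType) (a b : Rdefinitions.R) :
  closed [set p : X * Rdefinitions.R | a <= p.2 <= b].
Proof.
have -> : [set p : X * Rdefinitions.R | a <= p.2 <= b] = snd @^-1` ([set t | a <= t] `&` [set t | t <= b]).
  by apply/seteqP; split => p /= => [/andP[]|[] -> ->].
apply: (proj1 (continuous_closedP _)); last by apply: closedI; [exact: (@closed_ge Rdefinitions.R) | exact: (@closed_le Rdefinitions.R)].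
by move=> z; exact: cvg_snd.
Qed.

Lemma hom_refl (X Y : topologicalType) (f : X -> Y) : continuous f -> homotopic f f.
Proof.
move=> cf; exists (f \o fst); split; last by split.
apply: continuous_subspaceT => z.
exact: (@continuous_comp _ _ _ fst f z cvg_fst (cf _)).
Qed.

Lemma hom_post (X Y Z : topologicalType) (f g : X -> Y) (v : Y -> Z) :
  continuous v -> homotopic f g -> homotopic (v \o f) (v \o g).
Proof.
move=> cv [H [cH [H0 H1]]]; exists (v \o H); split; last first.
  by split => x /=; rewrite ?H0 ?H1.
move=> z; exact: (@continuous_comp (subspace _) _ _ (from_subspace _ H) v z (cH z) (cv _)).
Qed.

Lemma hom_pre (W X Y : topologicalType) (f g : X -> Y) (u : W -> X) :
  continuous u -> homotopic f g -> homotopic (f \o u) (g \o u).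
Proof.
move=> cu [H [cH [H0 H1]]].
exists (H \o (fun p : W * Rdefinitions.R => (u p.1, 1 * p.2 + 0))); split; last first.
  by split => x /=; rewrite mul1r addr0 ?H0 ?H1.
apply: (within_comp _ _ _ _ _ _ cH); first exact: cont_aff.
by move=> p /=; rewrite mul1r addr0.
Qed.

Lemma hom_sym (X Y : topologicalType) (f g : X -> Y) :
  homotopic f g -> homotopic g f.
Proof.
move=> [H [cH [H0 H1]]].
exists (H \o (fun p : X * Rdefinitions.R => (id p.1, -1 * p.2 + 1))); split; last first.
  by split => x /=; rewrite ?mulr0 ?add0r ?mulr1 ?addNr ?H0 ?H1.
apply: (within_comp _ _ _ _ _ _ cH); first exact: (@cont_aff X X id (-1) 1 (fun _ => cvg_id)).
move=> p /= /andP[p0 p1]; apply/andP; split.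
  by rewrite mulN1r addrC subr_ge0.
by rewrite mulN1r gerDr oppr_le0.
Qed.

Lemma hom_trans (X Y : topologicalType) (f g h : X -> Y) :
  homotopic f g -> homotopic g h -> homotopic f h.
Proof.
move=> [H1 [c1 [H10 H11]]] [H2 [c2 [H20 H21]]].
pose H := fun p : X * Rdefinitions.R =>
  if p.2 <= 2^-1 then H1 (p.1, 2 * p.2 + 0) else H2 (p.1, 2 * p.2 + -1).
exists H; split; last first.
  split => x; rewrite /H /=.
    by rewrite ifT ?mulr0 ?addr0 ?H10 //; lra.
  rewrite ifF; last by apply/negbTE; rewrite -ltNge; lra.
  have -> : 2 * 1 + -1 = 1 :> Rdefinitions.R by lra.
  by rewrite H21.
have -> : [set p : X * Rdefinitions.R | 0 <= p.2 <= 1] =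
  [set p | 0 <= p.2 <= 2^-1] `|` [set p | 2^-1 <= p.2 <= 1].
  apply/seteqP; split => p /=.
    move=> /andP[p0 p1]; case: (lerP p.2 2^-1) => hp.
      by left; apply/andP.
    by right; apply/andP; split => //; lra.
  by case=> /andP[a b]; apply/andP; split => //; lra.
apply: withinU_continuous; [exact: closed_strip | exact: closed_strip | |].
  apply: (@subspace_eq_continuous _ _ _ (from_subspace _ (H1 \o (fun p : X * Rdefinitions.R => (id p.1, 2 * p.2 + 0))))).
    by move=> p /set_mem /andP[a b]; rewrite /from_subspace /H /= b.
  apply: (@within_comp _ _ _ _ _ _ H1 (@cont_aff X X id 2 0 (fun _ => cvg_id)) _ c1).
  by move=> p /andP[a b] /=; apply/andP; split; lra.
apply: (@subspace_eq_continuous _ _ _ (from_subspace _ (H2 \o (fun p : X * Rdefinitions.R => (id p.1, 2 * p.2 + -1))))).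
  move=> p /set_mem /andP[a b]; rewrite /from_subspace /H /=.
  case: ifP => // hp.
  have e : p.2 = 2^-1 by lra.
  rewrite e; have -> : 2 * 2^-1 + 0 = 1 :> Rdefinitions.R by lra.
  have -> : 2 * 2^-1 + -1 = 0 :> Rdefinitions.R by lra.
  by rewrite H11 H20.
apply: (@within_comp _ _ _ _ _ _ H2 (@cont_aff X X id 2 (-1) (fun _ => cvg_id)) _ c2).
by move=> p /andP[a b] /=; apply/andP; split; lra.
Qed.

Arguments hom_refl {X Y f}.
Arguments hom_post {X Y Z f g v}.
Arguments hom_pre {W X Y f g u}.
Arguments hom_sym {X Y f g}.
Arguments hom_trans {X Y f g h}.

Lemma bond_aux (s : invseq) (i k d : nat) (e : (d + i = k + i)%N) (x : iobj s (k + i)) :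
  @bond_iter s i d (eq_rect_r (iobj s) x e) = @bond_iter s i k x.
Proof.
have dk : d = k by apply/eqP; rewrite -(eqn_add2r i) e.
subst d; by rewrite (eq_irrelevance e erefl).
Qed.

Lemma pbond_iter (s : invseq) (i k : nat) (h : (i <= k + i)%N) (x : iobj s (k + i)) :
  pbond h x = @bond_iter s i k x.
Proof. exact: bond_aux. Qed.

Lemma pbond_id (s : invseq) (i : nat) (h : (i <= i)%N) (x : iobj s i) :
  pbond h x = x.
Proof. exact: (@bond_aux s i 0). Qed.

Lemma cont_comp {A B D : topologicalType} (f : A -> B) (g : B -> D) :
  continuous f -> continuous g -> continuous (g \o f).
Proof. by move=> cf cg x; apply: continuous_comp; [exact: cf | exact: cg]. Qed.

Arguments cont_comp {A B D f g}.

Lemma bond_cont (s : invseq) (hs : forall n, continuous (@ibond s n)) n k :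
  continuous (@bond_iter s n k).
Proof.
elim: k => [|k IH] /=; first by move=> x; exact: cvg_id.
move=> x; apply: (@continuous_comp _ _ _ (@ibond s (k + n)) (@bond_iter s n k) x); [exact: hs | exact: IH].
Qed.

Lemma setval_cont (Y : topologicalType) (A : set Y) :
  continuous (set_val : set_type A -> Y).
Proof. exact: initial_continuous. Qed.

Theorem theorem3p5 (X : nat -> topologicalType)
    (q : forall n, X n.+1 -> X n)
    (hfin : forall n, finite_T0 (X n))
    (hq : forall n, continuous (q n))
    (C : forall n, set (X n))
    (hC : forall n, is_core (C n))
    (r : forall n, X n -> set_type (C n))
    (hr : forall n, continuous (r n))
    (hri : forall n (c : set_type (C n)), r n (set_val c) = c)
    (hir : forall n, homotopic (set_val \o r n) id) :
  pro_isomorphic (@InvSeq X q) (core_seq q r).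
Proof.
set SX := @InvSeq X q; set SC := core_seq q r.
have cSX : forall n, continuous (@ibond SX n) by exact: hq.
have cSC : forall n, continuous (@ibond SC n).
  move=> n; rewrite /SC /core_seq /= => x. apply: (@continuous_comp _ _ _ (q n \o set_val) (r n)). 2: exact: hr. apply: (@continuous_comp _ _ _ set_val (q n)). exact: setval_cont. exact: hq.
have L1 : forall n k, homotopic (r n \o @bond_iter SX n k)
                                (@bond_iter SC n k \o r (k + n)).
  move=> n; elim=> [|k IH]; first exact: hom_refl.
  have cM : continuous (@bond_iter SC n k \o r (k + n)).
    move=> x; apply: (@continuous_comp _ _ _ (r (k + n)) (@bond_iter SC n k)); [exact: hr | exact: (@bond_cont SC cSC)].
  have A1 := hom_pre (hq (k + n)) IH.
  have cM2 := cont_comp (hq (k + n)) cM.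
  have A2 := hom_post cM2 (hir (k.+1 + n)).
  exact: hom_trans A1 (hom_sym A2).
have L2 : forall n k, homotopic (set_val \o @bond_iter SC n k)
                                (@bond_iter SX n k \o set_val).
  move=> n; elim=> [|k IH].
    by apply: hom_refl; exact: setval_cont.
  have A1 := hom_pre (cSC (k + n)) IH.
  have A2 := hom_pre (cont_comp (@setval_cont _ (C (k + n).+1)) (hq (k + n)))
                     (hom_post (@bond_cont SX cSX n k) (hir (k + n))).
  exact: hom_trans A1 A2.
exists (fun n => n), (fun n => r n), (fun n => n), (fun n => @set_val _ (C n)).
split; [|split; [|split]].
- split; first by [].
  split; first exact: hr.
  move=> n m hnm hanm; move: (m - n)%N (subnK hnm) => k E; subst m.
  have -> : r n \o @pbond SX n (k + n) hanm = r n \o @bond_iter SX n k.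
    by apply/funext => x /=; rewrite pbond_iter.
  have -> : @pbond SC n (k + n) hnm \o r (k + n) = @bond_iter SC n k \o r (k + n).
    by apply/funext => x /=; rewrite pbond_iter.
  exact: L1.
- split; first by [].
  split; first by move=> n; exact: setval_cont.
  move=> n m hnm hanm; move: (m - n)%N (subnK hnm) => k E; subst m.
  have -> : set_val \o @pbond SC n (k + n) hanm = set_val \o @bond_iter SC n k.
    by apply/funext => x /=; rewrite pbond_iter.
  have -> : @pbond SX n (k + n) hnm \o @set_val _ (C (k + n)) = @bond_iter SX n k \o @set_val _ (C (k + n)).
    by apply/funext => x /=; rewrite pbond_iter.
  exact: L2.
- move=> n; exists n, (leqnn n), (leqnn n).
  rewrite /pro_comp /pro_id.
  have -> : (@set_val _ (C n) \o r n) \o @pbond SX n n (leqnn n) = set_val \o r n.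
    by apply/funext => x /=; rewrite pbond_id.
  have -> : (fun x : iobj SX n => x) \o @pbond SX n n (leqnn n) = id.
    by apply/funext => x /=; rewrite pbond_id.
  exact: hir.
- move=> n; exists n, (leqnn n), (leqnn n).
  rewrite /pro_comp /pro_id.
  have -> : (r n \o @set_val _ (C n)) \o @pbond SC n n (leqnn n) = id.
    by apply/funext => x /=; rewrite pbond_id hri.
  have -> : (fun x : iobj SC n => x) \o @pbond SC n n (leqnn n) = id.
    by apply/funext => x /=; rewrite pbond_id.
  by apply: hom_refl => x; exact: cvg_id.
Qed.
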